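(* Let $\mathcal{A}_l\subseteq\mathcal{A}$ be nonempty, let $\alpha=\frac{T_{\mathrm{off}}}{T_{\mathrm{off}}+T}$, let $\pi^*\in\arg\max_{\pi\in\Delta(\mathcal{A}_l)}\log\det\big(V_{(1-\alpha)\pi+\alpha\pi_{\mathrm{off}}}\big)$ and $\tilde\pi^\star=(1-\alpha)\pi^*+\alpha\pi_{\mathrm{off}}$. Then $$d=(1-\alpha)g_{\mathcal{A}_l}(\tilde\pi^\star)+\alpha\sum_{a\in\mathcal{A}}\pi_{\mathrm{off}}(a)\|a\|^2_{V^{-1}_{\tilde\pi^\star}},\qquad (1-\alpha)g_{\mathcal{A}_l}(\tilde\pi^\star)\le d_{\mathrm{eff}},$$ and for every $\pi\in\Delta(\mathcal{A}_l)$, writing $\tilde\pi=(1-\alpha)\pi+\alpha\pi_{\mathrm{off}}$ (with $V_{\tilde\pi}$ invertible), $$d\le(1-\alpha)g_{\mathcal{A}_l}(\tilde\pi)+\alpha\sum_{a\in\mathcal{A}}\pi_{\mathrm{off}}(a)\|a\|^2_{V^{-1}_{\tilde\pi}}.$$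
   Context: $\mathcal{A}\subset\mathbb{R}^d$ is finite with $\mathrm{span}(\mathcal{A})=\mathbb{R}^d$; $\pi_{\mathrm{off}}\in\Delta(\mathcal{A})$ (probability simplex over $\mathcal{A}$); $T,T_{\mathrm{off}}$ are nonnegative integers with $T\ge1$. For $\pi\in\Delta(\mathcal{A})$, $V_\pi=\sum_a\pi(a)aa^\top$, $\|x\|_B=\sqrt{x^\top Bx}$, $g_{\mathcal{B}}(\pi)=\max_{a\in\mathcal{B}}\|a\|^2_{V_\pi^{-1}}$, $\lambda_k(B)$ the $k$-th smallest eigenvalue, and $d_{\mathrm{eff}}=\min\big(\sum_{k=1}^d(1+\frac{T_{\mathrm{off}}}{T}\frac{\lambda_k(V_{\pi_{\mathrm{off}}})}{\max_a\|a\|^2})^{-1},\frac{T}{T_{\mathrm{off}}}g_{\mathcal{A}}(\pi_{\mathrm{off}})\big)$ (the second term being $+\infty$ when undefined). *)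

(* Defs.v *)
From HB Require Import structures.
From mathcomp Require Import all_boot all_order all_algebra.
From mathcomp Require Import all_classical all_reals all_analysis.

Set Implicit Arguments.
Unset Strict Implicit.
Unset Printing Implicit Defensive.

Import Order.TTheory GRing.Theory Num.Theory.
Local Open Scope ring_scope.

Section Defs.
Variables (R : realType) (d : nat).

(* A finite set of actions in R^d given as a duplicate-free sequence of
   column vectors; a distribution over a finite set S is a function on
   R^d, nonnegative on S, zero outside S, summing to 1 over S. *)
Definition is_dist (S : seq 'cV[R]_d) (p : 'cV[R]_d -> R) : Prop :=
  [/\ forall a, a \in S -> 0 <= p a,
      forall a, a \notin S -> p a = 0
    & \sum_(a <- S) p a = 1].

(* span(S) = R^d : the matrix whose rows are the a^T has full row space *)
Definition spans (S : seq 'cV[R]_d) : bool :=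
  row_full (\matrix_(i < size S) (nth 0 S i)^T).

Definition Vmat (A : seq 'cV[R]_d) (p : 'cV[R]_d -> R) : 'M[R]_d :=
  \sum_(a <- A) p a *: (a *m a^T).

Definition wnorm2 (B : 'M[R]_d) (a : 'cV[R]_d) : R := (a^T *m B *m a) 0 0.

Definition gfun (A B : seq 'cV[R]_d) (p : 'cV[R]_d -> R) : R :=
  \big[Num.max/0]_(a <- B) wnorm2 (invmx (Vmat A p)) a.

Definition mix (al : R) (p q : 'cV[R]_d -> R) : 'cV[R]_d -> R :=
  fun a => (1 - al) * p a + al * q a.

(* lam k is the k-th smallest eigenvalue (with multiplicity) of M *)
Definition is_sorted_spectrum (M : 'M[R]_d) (lam : 'I_d -> R) : Prop :=
  char_poly M = \prod_(k < d) ('X - (lam k)%:P) /\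
  (forall i j : 'I_d, (i <= j)%N -> lam i <= lam j).

(* d_eff, with the second term +oo when T_off = 0 or V_off is singular *)
Definition deff (A : seq 'cV[R]_d) (poff : 'cV[R]_d -> R) (T Toff : nat)
    (lam : 'I_d -> R) : \bar R :=
  let M := \big[Num.max/0]_(a <- A) (a^T *m a) 0 0 in
  let s1 := \sum_(k < d) (1 + (Toff%:R / T%:R) * (lam k / M))^-1 in
  let s2 := if (0 < Toff)%N && (Vmat A poff \in unitmx)
            then ((T%:R / Toff%:R) * gfun A A poff)%:E
            else +oo%E in
  mine s1%:E s2.

End Defs.

(* Main.v *)
Require Import Defs.
From HB Require Import structures.
From mathcomp Require Import all_boot all_order all_algebra.
From mathcomp Require Import all_classical all_reals all_analysis.
From mathcomp Require Import fingroup perm ring lra.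
Import Order.TTheory GRing.Theory Num.Theory.
Local Open Scope ring_scope.

Lemma coef_prod_lin (R : fieldType) (I : Type) (s : seq I) (a b : I -> R) :
  (forall i, a i != 0) ->
  (\prod_(i <- s) ((a i)%:P + 'X * (b i)%:P))`_0 = \prod_(i <- s) a i /\
  (\prod_(i <- s) ((a i)%:P + 'X * (b i)%:P))`_1 =
     (\prod_(i <- s) a i) * \sum_(i <- s) b i / a i.
Proof.
move=> anz; elim: s => [|x s [IH0 IH1]].
  by rewrite !big_nil !coef1 /= mulr0.
rewrite !big_cons mulrDl -mulrA !coefD !coefCM !coefXM /= IH0 IH1 coefCM IH0.
split; first by rewrite addr0.
have := anz x; set ax := a x; set P := \prod_(j <- s) a j => axnz.
by rewrite mulrDr mulrA; field.
Qed.

Lemma det_coef01 (R : fieldType) (n : nat) (F : 'M[R]_n) :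
  (\det (1%:M + 'X *: map_mx polyC F))`_0 = 1 /\
  (\det (1%:M + 'X *: map_mx polyC F))`_1 = \tr F.
Proof.
set M := 1%:M + _.
have ME : forall i j, M i j = (i == j)%:R%:P + 'X * (F i j)%:P.
  by move=> i j; rewrite !mxE; case: (i == j); rewrite ?polyC1 ?polyC0.
have other : forall s : {perm 'I_n}, s != 1%g -> forall k, (k < 2)%N ->
    ((-1) ^+ s * \prod_i M i (s i))`_k = 0.
  move=> s s1 k k2.
  have [i si] : exists i, s i != i.
    apply/existsP; apply: contraR s1 => /existsPn H; apply/eqP/permP => i.
    by rewrite perm1; apply/eqP; move: (H i); rewrite negbK.
  set j := s i.
  have sj : s j != j by apply: contra si => /eqP /perm_inj /eqP.
  have ji : j != i by [].
  rewrite (bigD1 i); last by [].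
  rewrite (bigD1 j); last by rewrite /= ji.
  have e1 : (i == s i) = false by rewrite eq_sym (negbTE si).
  have e2 : (j == s j) = false by rewrite eq_sym (negbTE sj).
  rewrite !ME e1 e2 !polyC0 !add0r.
  set a := (F i (s i))%:P. set b := (F j (s j))%:P.
  set r := (\prod_(i0 | true && (i0 != i) && (i0 != j)) M i0 (s i0)).
  set sg := (-1) ^+ _.
  change ((sg * ('X * a * ('X * b * r)))`_k = 0).
  rewrite (_ : sg * _ = 'X^2 * (sg * a * b * r)); last by rewrite expr2; ring.
  by rewrite coefXnM k2.
rewrite /determinant (bigD1 1%g) //= odd_perm1 expr0 mul1r !coefD !coef_sum.
have h : forall k, (k < 2)%N -> \sum_(s : {perm 'I_n} | s != 1%g) ((-1) ^+ s * \prod_i0 M i0 (s i0))`_k = 0.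
  by move=> k k2; apply: big1 => s s1; apply: other.
rewrite !h // !addr0.
have -> : \prod_i M i ((1 : {perm 'I_n})%g i) = \prod_i ((1 : R)%:P + 'X * (F i i)%:P).
  by apply: eq_bigr => i _; rewrite perm1 ME eqxx.
have [-> ->] := @coef_prod_lin R _ (index_enum 'I_n) (fun _ => 1) (fun i => F i i) (fun _ => oner_neq0 R).
rewrite big1_eq mul1r /mxtrace; split => //; apply: eq_bigr => i _; by rewrite divr1.
Qed.

Lemma small_t (R : realFieldType) (Q : {poly R}) :
  Q`_0 = 1 -> 0 < Q`_1 -> exists2 t : R, 0 < t <= 1 & 1 < Q.[t].
Proof.
move=> Q0 Q1.
set K := \sum_(i < size Q) `|Q`_(i.+2)|.
have K0 : 0 <= K by apply: sumr_ge0 => i _; exact: normr_ge0.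
set t := Q`_1 / (Q`_1 + K).
have tpos : 0 < t by apply: divr_gt0 => //; exact: ltr_wpDr.
have tK : t * (Q`_1 + K) = Q`_1 by rewrite /t mulfVK // gt_eqF // ltr_wpDr.
have t1 : t <= 1 by rewrite ler_pdivrMr ?mul1r ?lerDl // ltr_wpDr.
exists t; first by rewrite tpos t1.
rewrite (@horner_coef_wide _ (size Q).+2); last by rewrite leqW.
rewrite big_ord_recl big_ord_recl.
rewrite (_ : \sum_(i < size Q) _ = \sum_(i < size Q) Q`_(i.+2) * t ^+ i.+2); last first.
  by apply: eq_bigr => i _; rewrite !lift0.
rewrite Q0 expr0 mulr1 expr1.
have bound : - (K * t ^+ 2) <= \sum_(i < size Q) Q`_(i.+2) * t ^+ i.+2.
  rewrite /K mulr_suml -sumrN; apply: ler_sum => i _.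
  have ti : t ^+ i.+2 <= t ^+ 2.
    have -> : t ^+ i.+2 = t ^+ 2 * t ^+ i by rewrite -exprD.
    rewrite -[X in _ <= X]mulr1; apply: ler_wpM2l.
      exact: exprn_ge0 (ltW tpos).
    exact: exprn_ile1 (ltW tpos) t1.
  have u0 : 0 <= t ^+ i.+2 by apply: exprn_ge0; exact: ltW.
  have n1 : - `|Q`_i.+2| <= Q`_i.+2 by exact: lerNnormlW.
  have n0 : 0 <= `|Q`_i.+2| by exact: normr_ge0.
  nra.
rewrite lift0.
have h : Q`_1 - K * t = t * Q`_1.
  move: tK; rewrite mulrDr => tK; lra.
have h2 : 0 < t * t * Q`_1 by rewrite mulr_gt0 // mulr_gt0.
rewrite expr2 in bound.
nra.
Qed.

Lemma e11M (R : comRingType) (n : nat) (u : 'M[R]_(1, n)) (v : 'M[R]_(n, 1)) (w : 'M[R]_(1,1)) :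
  (u *m v *m w) 0 0 = (u *m v) 0 0 * w 0 0.
Proof. by rewrite [LHS]mxE big_ord1. Qed.

Lemma dotC (R : comRingType) (n : nat) (u v : 'cV[R]_n) :
  (u^T *m v) 0 0 = (v^T *m u) 0 0.
Proof. by rewrite -[u in RHS]trmxK -trmx_mul [RHS]mxE. Qed.

Lemma tr_form (R : comRingType) (n : nat) (B : 'M[R]_n) (a : 'cV[R]_n) :
  (a^T *m B *m a) 0 0 = \tr (B *m (a *m a^T)).
Proof. by rewrite -trace_mx11 mxtrace_mulC !mulmxA mxtrace_mulC mulmxA. Qed.

Lemma Vmat_lin (R : realType) (n : nat) (A : seq 'cV[R]_n) (p q : 'cV[R]_n -> R) x y :
  Vmat A (fun a => x * p a + y * q a) = x *: Vmat A p + y *: Vmat A q.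
Proof.
rewrite /Vmat !scaler_sumr -big_split /=; apply: eq_bigr => a _.
by rewrite scalerDl !scalerA.
Qed.

Lemma sum_tr (R : realType) (n : nat) (A : seq 'cV[R]_n) (p : 'cV[R]_n -> R) (B : 'M[R]_n) :
  \sum_(a <- A) p a * wnorm2 B a = \tr (B *m Vmat A p).
Proof.
rewrite /Vmat mulmx_sumr raddf_sum /=; apply: eq_bigr => a _.
by rewrite /wnorm2 tr_form -scalemxAr mxtraceZ.
Qed.

Lemma Vmat_sym (R : realType) (n : nat) (A : seq 'cV[R]_n) (p : 'cV[R]_n -> R) :
  (Vmat A p)^T = Vmat A p.
Proof.
rewrite /Vmat raddf_sum /=; apply: eq_bigr => a _.
by rewrite linearZ /= trmx_mul trmxK.
Qed.

Lemma Vmat_quad (R : realType) (n : nat) (A : seq 'cV[R]_n) (p : 'cV[R]_n -> R) y :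
  wnorm2 (Vmat A p) y = \sum_(a <- A) p a * ((a^T *m y) 0 0) ^+ 2.
Proof.
rewrite /wnorm2 /Vmat mulmx_sumr mulmx_suml summxE; apply: eq_bigr => a _.
rewrite -scalemxAr -scalemxAl mxE; congr (_ * _).
by rewrite mulmxA -[(y^T *m a *m a^T) *m y]mulmxA [LHS]mxE big_ord1 (@dotC _ _ y a) expr2.
Qed.

Lemma eB (R : zmodType) m n (A B : 'M[R]_(m, n)) i j : (A - B) i j = A i j - B i j.
Proof. by rewrite !mxE. Qed.

Lemma eD (R : zmodType) m n (A B : 'M[R]_(m, n)) i j : (A + B) i j = A i j + B i j.
Proof. by rewrite !mxE. Qed.

Lemma eZ (R : pzRingType) m n k (A : 'M[R]_(m, n)) i j : (k *: A) i j = k * A i j.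
Proof. by rewrite !mxE. Qed.

Lemma Vmat_psd (R : realType) (n : nat) (A : seq 'cV[R]_n) (p : 'cV[R]_n -> R) y :
  (forall a, a \in A -> 0 <= p a) -> 0 <= wnorm2 (Vmat A p) y.
Proof.
move=> p0; rewrite Vmat_quad big_seq; apply: sumr_ge0 => a aA.
by rewrite mulr_ge0 ?p0 ?sqr_ge0.
Qed.

Lemma inv_form (R : realType) (n : nat) (V : 'M[R]_n) x :
  V^T = V -> V \in unitmx -> wnorm2 (invmx V) x = wnorm2 V (invmx V *m x).
Proof.
move=> sV uV; rewrite /wnorm2 trmx_mul trmx_inv sV mulmxKV //.
by rewrite mulmxA.
Qed.

Lemma pd_unit (R : realType) (n : nat) (M : 'M[R]_n) :
  (forall x : 'cV[R]_n, x != 0 -> 0 < wnorm2 M x) -> M \in unitmx.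
Proof.
move=> pd; rewrite unitmxE unitfE; apply/det0P => -[v v0 vM].
have := pd v^T; rewrite trmx_eq0 => /(_ v0).
by rewrite /wnorm2 trmxK vM mul0mx mxE ltxx.
Qed.

Lemma loewner (R : realType) (n : nat) (X Y : 'M[R]_n) b :
  X^T = X -> Y^T = Y -> X \in unitmx -> Y \in unitmx ->
  (forall y, 0 <= wnorm2 X y) -> (forall y, wnorm2 X y <= wnorm2 Y y) ->
  wnorm2 (invmx Y) b <= wnorm2 (invmx X) b.
Proof.
move=> sX sY uX uY Xp XY.
set u := invmx Y *m b; set z := invmx X *m b.
have h := Xp (u - z).
have e1 : wnorm2 X (u - z) = wnorm2 X u - 2 * (b^T *m u) 0 0 + (b^T *m z) 0 0.
  rewrite /wnorm2.
  have -> : (u - z)^T = u^T - z^T by rewrite linearB.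
  rewrite !(mulmxBl, mulmxBr).
  have Xz : X *m z = b by rewrite /z mulmxA mulmxV // mul1mx.
  have zX : z^T *m X = b^T by rewrite -{1}sX -trmx_mul Xz.
  rewrite zX -!mulmxA Xz !eB (@dotC _ _ u b); lra.
have e2 : wnorm2 X u <= (b^T *m u) 0 0.
  have Yu : Y *m u = b by rewrite /u mulmxA mulmxV // mul1mx.
  by have := XY u; rewrite {2}/wnorm2 -mulmxA Yu (@dotC _ _ u b).
have e3 : wnorm2 (invmx Y) b = (b^T *m u) 0 0 by rewrite /wnorm2 -mulmxA.
have e4 : wnorm2 (invmx X) b = (b^T *m z) 0 0 by rewrite /wnorm2 -mulmxA.
rewrite e3 e4; rewrite e1 in h; lra.
Qed.

Lemma dot_ge0 (R : realType) (n : nat) (v : 'cV[R]_n) : 0 <= (v^T *m v) 0 0.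
Proof. by rewrite mxE; apply: sumr_ge0 => i _; rewrite mxE -expr2 sqr_ge0. Qed.

Lemma dot_eq0 (R : realType) (n : nat) (v : 'cV[R]_n) : (v^T *m v) 0 0 = 0 -> v = 0.
Proof.
rewrite mxE => /eqP; rewrite psumr_eq0 => [/allP h|i _]; last first.
  by rewrite mxE -expr2 sqr_ge0.
apply/matrixP => i j; rewrite (ord1 j) mxE.
have := h i (mem_index_enum _); rewrite mxE -expr2 sqrf_eq0 => /eqP //.
Qed.

Lemma CS (R : realType) (n : nat) (a y : 'cV[R]_n) :
  ((a^T *m y) 0 0) ^+ 2 <= (a^T *m a) 0 0 * (y^T *m y) 0 0.
Proof.
have [/dot_eq0 -> | ] := eqVneq ((y^T *m y) 0 0) 0.
  by rewrite !mulmx0 !mxE expr0n /= mulr0.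
move=> s0; have sp : 0 < (y^T *m y) 0 0 by rewrite lt0r s0 dot_ge0.
set s := (y^T *m y) 0 0; set c := (a^T *m y) 0 0; set A := (a^T *m a) 0 0.
have h := @dot_ge0 _ _ (s *: a - c *: y).
have e : ((s *: a - c *: y)^T *m (s *: a - c *: y)) 0 0 = s * (s * A - c ^+ 2).
  have -> : (s *: a - c *: y)^T = s *: a^T - c *: y^T by rewrite linearB !linearZ.
  rewrite !(mulmxBl, mulmxBr) -!scalemxAl -!scalemxAr.
  rewrite !eB !eZ -/s -/c -/A (@dotC _ _ y a) -/c; ring.
by rewrite e pmulr_rge0 // subr_ge0 mulrC in h.
Qed.

Lemma bmax_ge (R : realType) (T : eqType) (s : seq T) (F : T -> R) x :
  x \in s -> F x <= \big[Num.max/0]_(a <- s) F a.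
Proof.
elim: s => [//|y s IH]; rewrite in_cons big_cons => /orP [/eqP ->|xs].
  by rewrite le_max lexx.
by rewrite le_max IH ?orbT.
Qed.

Lemma bmax_ge0 (R : realType) (T : eqType) (s : seq T) (F : T -> R) :
  0 <= \big[Num.max/0]_(a <- s) F a.
Proof.
elim: s => [|y s IH]; first by rewrite big_nil.
by rewrite big_cons le_max IH orbT.
Qed.

Lemma bmax_le (R : realType) (T : eqType) (s : seq T) (F : T -> R) c :
  0 <= c -> (forall x, x \in s -> F x <= c) -> \big[Num.max/0]_(a <- s) F a <= c.
Proof.
move=> c0; elim: s => [|y s IH] h; first by rewrite big_nil.
rewrite big_cons ge_max h ?mem_head ?IH // => x xs.
by apply: h; rewrite in_cons xs orbT.
Qed.

Lemma sum_sub (R : realType) (T : eqType) (A Al : seq T) (f : T -> R) :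
  uniq A -> uniq Al -> {subset Al <= A} -> (forall a, a \notin Al -> f a = 0) ->
  \sum_(a <- A) f a = \sum_(a <- Al) f a.
Proof.
move=> uA uAl sub f0.
rewrite (bigID (fun a => a \in Al)) /= [X in _ + X]big1 ?addr0; last first.
  by move=> a /f0.
rewrite -big_filter; apply: perm_big; apply: uniq_perm => //.
  exact: filter_uniq.
move=> x; rewrite mem_filter; case xAl: (x \in Al) => //=.
by rewrite sub.
Qed.

Lemma sum_delta (R : realType) (T : eqType) (A : seq T) b :
  uniq A -> b \in A -> \sum_(a <- A) ((a == b)%:R : R) = 1.
Proof.
move=> uA bA; rewrite (bigD1_seq b) //= eqxx big1 ?addr0 //.
by move=> a /negbTE ->.
Qed.

Lemma Vmat_delta (R : realType) (n : nat) (A : seq 'cV[R]_n) b :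
  uniq A -> b \in A -> Vmat A (fun a => (a == b)%:R) = b *m b^T.
Proof.
move=> uA bA; rewrite /Vmat (bigD1_seq b) //= eqxx scale1r big1 ?addr0 //.
by move=> a /negbTE ->; rewrite scale0r.
Qed.

Lemma det_eval (R : realType) (n : nat) (F : 'M[R]_n) t :
  (\det (1%:M + 'X *: map_mx polyC F)).[t] = \det (1%:M + t *: F).
Proof.
rewrite -[_.[t]]/(horner_eval t _) -det_map_mx; congr (\det _).
by apply/matrixP => i j; rewrite !mxE rmorphD rmorphM rmorph_nat /= !horner_evalE hornerX hornerC.
Qed.

Lemma wn_lin (R : realType) (n : nat) (M1 M2 : 'M[R]_n) k x :
  wnorm2 (M1 + k *: M2) x = wnorm2 M1 x + k * wnorm2 M2 x.
Proof. by rewrite /wnorm2 mulmxDr mulmxDl -scalemxAr -scalemxAl eD eZ. Qed.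

Lemma wn_1B (R : realType) (n : nat) (M : 'M[R]_n) x :
  wnorm2 (1%:M - M) x = (x^T *m x) 0 0 - wnorm2 M x.
Proof. by rewrite /wnorm2 mulmxBr mulmxBl mulmx1 eB. Qed.

Lemma det_pos (R : realType) (n : nat) (A : seq 'cV[R]_n) (w : 'cV[R]_n -> R) :
  (forall a, a \in A -> 0 <= w a) -> Vmat A w \in unitmx -> 0 < \det (Vmat A w).
Proof.
move=> w0 uV; set V := Vmat A w.
set F := invmx V *m (1%:M - V).
set Q := \det (1%:M + 'X *: map_mx polyC F).
have QE : forall s, \det V * Q.[s] = \det (V + s *: (1%:M - V)).
  move=> s; rewrite det_eval -det_mulmx mulmxDr mulmx1 -scalemxAr /F mulmxA.
  by rewrite mulmxV // mul1mx.
have Q0 : Q.[0] = 1 by rewrite horner_coef0; case: (@det_coef01 _ _ F).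
have Qnz : forall s, 0 <= s <= 1 -> Q.[s] != 0.
  move=> s /andP [s0 s1]; have [->|sn0] := eqVneq s 0; first by rewrite Q0 oner_neq0.
  have sp : 0 < s by rewrite lt0r sn0 s0.
  have uM : V + s *: (1%:M - V) \in unitmx.
    apply: pd_unit => x x0; rewrite wn_lin wn_1B.
    have h1 : 0 <= wnorm2 V x by apply: Vmat_psd.
    have h2 : 0 < (x^T *m x) 0 0.
      by rewrite lt0r dot_ge0 andbT; apply: contra x0 => /eqP /dot_eq0 ->.
    nra.
  move: uM; rewrite unitmxE unitfE -QE mulf_eq0 negb_or => /andP [] //.
have dV0 : \det V != 0 by rewrite -unitfE -unitmxE.
have Q1 : \det V * Q.[1] = 1 by rewrite QE scale1r addrC subrK det1.
have [dVn|//|e] := ltrgtP (\det V) 0; last by rewrite e eqxx in dV0.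
have Q1n : Q.[1] < 0.
  rewrite ltNge; apply/negP => q1; have := mulr_le0_ge0 (ltW dVn) q1.
  by rewrite Q1 ler10.
have := @poly_ivt R (- Q) 0 1 ler01.
rewrite !hornerN Q0 lerN10 /= oppr_ge0 (ltW Q1n) => /(_ isT) [x x01].
by rewrite /root hornerN oppr_eq0 (negbTE (Qnz x x01)).
Qed.

Lemma coef0_prod_lin (R : fieldType) (I : Type) (s : seq I) (a b : I -> R) :
  (\prod_(i <- s) ((a i)%:P + 'X * (b i)%:P))`_0 = \prod_(i <- s) a i.
Proof.
elim: s => [|x s IH]; first by rewrite !big_nil coef1.
by rewrite !big_cons mulrDl -mulrA coefD coefCM coefXM /= IH addr0.
Qed.

Lemma trinv_eig (R : realType) (n : nat) (V : 'M[R]_n) (lam : 'I_n -> R) (c al : R) :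
  char_poly V = \prod_(k < n) ('X - (lam k)%:P) -> al != 0 ->
  (c%:M + al *: V) \in unitmx ->
  \tr (invmx (c%:M + al *: V)) = \sum_(k < n) (c + al * lam k)^-1.
Proof.
move=> cV al0 uN; set N := c%:M + al *: V.
set mu := fun k => c + al * lam k.
set q : {poly R} := (- al^-1) *: ('X + c%:P).
have E1 : \det (map_mx polyC N + 'X *: 1%:M) = \prod_(k < n) ((mu k)%:P + 'X * 1%:P).
  have : (char_poly V) \Po q = \det (q%:M - map_mx polyC V).
    rewrite /char_poly -det_map_mx; congr (\det _).
    apply/matrixP => i j; rewrite !mxE rmorphB /= rmorphMn /= comp_polyX comp_polyC.
    by [].
  rewrite cV => E.
  have E2 : \det (map_mx polyC N + 'X *: 1%:M) = (- al)%:P ^+ n * \det (q%:M - map_mx polyC V).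
    rewrite -detZ; congr (\det _); apply/matrixP => i j; rewrite !mxE.
    have h : (- al)%:P * (- al^-1)%:P = 1 :> {poly R}.
      by rewrite -polyCM mulrNN mulfV // polyC1.
    rewrite /q; case: eqP => _ /=; rewrite ?mulr1n ?mulr0n ?mulr1 ?mulr0.
    - rewrite polyCD polyCM -!mul_polyC mulrBr mulrA h mul1r polyCN mulNr opprK.
      ring.
    - by rewrite add0r addr0 sub0r polyCN polyCM mulrNN.
  rewrite E2 -E.
  have -> : (- al)%:P ^+ n = \prod_(k < n) (- al)%:P :> {poly R}.
    by rewrite prodr_const card_ord.
  rewrite rmorph_prod /= -big_split /=.
  apply: eq_bigr => k _; rewrite rmorphB /= comp_polyX comp_polyC /q.
  have h : (- al)%:P * (- al^-1)%:P = 1 :> {poly R}.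
    by rewrite -polyCM mulrNN mulfV // polyC1.
  rewrite -mul_polyC mulrBr mulrA h mul1r /mu polyCD polyCM polyCN polyC1.
  ring.
have E3 : (\det N)%:P * \det (1%:M + 'X *: map_mx polyC (invmx N)) =
          \det (map_mx polyC N + 'X *: 1%:M).
  have -> : (\det N)%:P = \det (map_mx polyC N) by rewrite det_map_mx.
  rewrite -det_mulmx mulmxDr mulmx1 -scalemxAr -map_mxM mulmxV // map_mx1.
  by [].
have [D0 D1] := @det_coef01 _ _ (invmx N).
have c0 : \det N = \prod_(k < n) mu k.
  have := congr1 (fun p : {poly R} => p`_0) E3.
  by rewrite /= coefCM D0 mulr1 E1 coef0_prod_lin.
have dN : \det N != 0 by rewrite -unitfE -unitmxE.
have munz : forall k, mu k != 0.
  by move=> k; move: dN; rewrite c0 => /prodf_neq0; apply.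
have := congr1 (fun p : {poly R} => p`_1) E3.
rewrite /= coefCM D1 E1; have [_ ->] := @coef_prod_lin _ _ (index_enum 'I_n) mu (fun _ => 1) munz.
rewrite -c0 => /(mulfI dN) ->; apply: eq_bigr => k _; by rewrite div1r.
Qed.

Lemma wn_Z (R : realType) (n : nat) (M : 'M[R]_n) k x :
  wnorm2 (k *: M) x = k * wnorm2 M x.
Proof. by rewrite /wnorm2 -scalemxAr -scalemxAl eZ. Qed.

Lemma wn_D (R : realType) (n : nat) (M1 M2 : 'M[R]_n) x :
  wnorm2 (M1 + M2) x = wnorm2 M1 x + wnorm2 M2 x.
Proof. by rewrite /wnorm2 mulmxDr mulmxDl eD. Qed.

Lemma d_split (R : realType) (n : nat) (A : seq 'cV[R]_n) (p q : 'cV[R]_n -> R) al :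
  Vmat A (mix al p q) \in unitmx ->
  n%:R = (1 - al) * \sum_(a <- A) p a * wnorm2 (invmx (Vmat A (mix al p q))) a
         + al * \sum_(a <- A) q a * wnorm2 (invmx (Vmat A (mix al p q))) a.
Proof.
move=> uV; rewrite -[n%:R]mxtrace1 -(mulVmx uV) -sum_tr !mulr_sumr -big_split /=.
by apply: eq_bigr => a _; rewrite /mix mulrDl !mulrA.
Qed.

Lemma conv_le (R : realType) (n : nat) (Al : seq 'cV[R]_n) (p f : 'cV[R]_n -> R) g :
  is_dist Al p -> (forall a, a \in Al -> f a <= g) -> \sum_(a <- Al) p a * f a <= g.
Proof.
move=> [p0 _ p1] fg; apply: (@le_trans _ _ (\sum_(a <- Al) p a * g)).
  by rewrite big_seq [X in _ <= X]big_seq; apply: ler_sum => a aA; rewrite ler_wpM2l ?p0 ?fg.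
by rewrite -mulr_suml p1 mul1r.
Qed.

Lemma eN (R : zmodType) m n (A : 'M[R]_(m, n)) i j : (- A) i j = - A i j.
Proof. by rewrite !mxE. Qed.

Theorem lemma4p4 (R : realType) (d : nat) (A Al : seq 'cV[R]_d)
  (poff : 'cV[R]_d -> R) (T Toff : nat) (lam : 'I_d -> R)
  (pstar : 'cV[R]_d -> R) :
  uniq A -> spans A -> is_dist A poff -> (1 <= T)%N ->
  is_sorted_spectrum (Vmat A poff) lam ->
  uniq Al -> {subset Al <= A} -> Al != [::] ->
  let al : R := Toff%:R / (Toff + T)%:R in
  is_dist Al pstar ->
  Vmat A (mix al pstar poff) \in unitmx ->
  (forall p, is_dist Al p -> Vmat A (mix al p poff) \in unitmx ->
     ln (\det (Vmat A (mix al p poff)))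
       <= ln (\det (Vmat A (mix al pstar poff)))) ->
  let pt := mix al pstar poff in
  [/\ d%:R = (1 - al) * gfun A Al pt
             + al * \sum_(a <- A) poff a * wnorm2 (invmx (Vmat A pt)) a,
      (((1 - al) * gfun A Al pt)%:E <= deff A poff T Toff lam)%E
    & forall p, is_dist Al p -> Vmat A (mix al p poff) \in unitmx ->
        d%:R <= (1 - al) * gfun A Al (mix al p poff)
               + al * \sum_(a <- A) poff a
                        * wnorm2 (invmx (Vmat A (mix al p poff))) a].
Proof.
move=> uA spA dOff T1 spec uAl sub Aln al dstar uV opt pt.
have dOff' := dOff; case: dOff' => [poff0 poffz poff1].
have dstar' := dstar; case: dstar' => [ps0 psz ps1].
have TP : 0 < T%:R :> R by rewrite ltr0n.
have TTP : 0 < (Toff + T)%:R :> R by rewrite ltr0n addn_gt0 T1 orbT.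
have al0 : 0 <= al by rewrite /al divr_ge0.
have omaE : 1 - al = T%:R / (Toff + T)%:R.
  by rewrite /al natrD; field; rewrite -natrD gt_eqF.
have oma : 0 < 1 - al by rewrite omaE divr_gt0.
have psge0 : forall a, 0 <= pstar a.
  by move=> a; case: (boolP (a \in Al)) => [/ps0 //|/psz ->].
have poffge0 : forall a, 0 <= poff a.
  by move=> a; case: (boolP (a \in A)) => [/poff0 //|/poffz ->].
have ptge0 : forall a, 0 <= pt a by move=> a; rewrite /pt /mix addr_ge0 // mulr_ge0 // ltW.
set V := Vmat A pt.
have sV : V^T = V by exact: Vmat_sym.
set nV := fun a => wnorm2 (invmx V) a.
have nV0 : forall a, 0 <= nV a.
  by move=> a; rewrite /nV inv_form //; apply: Vmat_psd => b _; exact: ptge0.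
set s := \sum_(a <- A) pstar a * nV a.
have sAl : s = \sum_(a <- Al) pstar a * nV a.
  by apply: sum_sub => // a /psz ->; rewrite mul0r.
have dE : d%:R = (1 - al) * s + al * \sum_(a <- A) poff a * nV a by exact: d_split.
have C3 : forall p, is_dist Al p -> Vmat A (mix al p poff) \in unitmx ->
        d%:R <= (1 - al) * gfun A Al (mix al p poff)
               + al * \sum_(a <- A) poff a
                        * wnorm2 (invmx (Vmat A (mix al p poff))) a.
  move=> p dp up; rewrite {1}(@d_split _ _ _ _ _ _ up) lerD2r ler_wpM2l ?(ltW oma) //.
  have [_ pz _] := dp.
  rewrite (@sum_sub _ _ A Al) //; last by move=> a /pz ->; rewrite mul0r.
  by apply: conv_le => // a aAl; apply: bmax_ge.
have dV : 0 < \det V by apply: det_pos => // a _; exact: ptge0.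
have KKT : forall b, b \in Al -> nV b <= s.
  move=> b bAl; rewrite leNgt; apply/negP => sb.
  set E := (1 - al) *: (b *m b^T - Vmat A pstar).
  set F := invmx V *m E.
  set Q := \det (1%:M + 'X *: map_mx polyC F).
  have [Q0 Q1] := @det_coef01 _ _ F.
  have trF : \tr F = (1 - al) * (nV b - s).
    rewrite /F /E -scalemxAr mxtraceZ mulmxBr raddfB /= -tr_form /s -sum_tr.
    by [].
  have Q1p : 0 < Q`_1 by rewrite Q1 trF mulr_gt0 // subr_gt0.
  have [t /andP [t0 t1] Qt] := @small_t _ _ Q0 Q1p.
  set pb := fun a => (1 - t) * pstar a + t * (a == b)%:R.
  have dpb : is_dist Al pb.
    split.
    - move=> a aAl; rewrite /pb addr_ge0 // mulr_ge0 ?psge0 ?ler0n //.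
        by rewrite subr_ge0.
      exact: ltW.
    - move=> a aAl; rewrite /pb psz // mulr0 add0r.
      have -> : (a == b) = false by apply: contraNF aAl => /eqP ->.
      by rewrite mulr0.
    - by rewrite /pb big_split /= -!mulr_sumr ps1 sum_delta // !mulr1 subrK.
  have VtE : Vmat A (mix al pb poff) = V + t *: E.
    rewrite /V /pt /mix !Vmat_lin Vmat_delta ?sub //.
    by apply/matrixP => i j; rewrite /E !(eD, eZ, eN); ring.
  have detVt : \det (Vmat A (mix al pb poff)) = \det V * Q.[t].
    by rewrite VtE det_eval -det_mulmx mulmxDr mulmx1 -scalemxAr /F mulmxA mulmxV // mul1mx.
  have dVt : \det V < \det (Vmat A (mix al pb poff)).
    by rewrite detVt -{1}[\det V]mulr1 ltr_pM2l.
  have dVt0 := lt_trans dV dVt.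
  have uVt : Vmat A (mix al pb poff) \in unitmx by rewrite unitmxE unitfE gt_eqF.
  have := opt pb dpb uVt; rewrite -/pt -/V.
  by rewrite leNgt ltr_ln ?posrE ?dV ?dVt0 // dVt.
have gE : gfun A Al pt = s.
  apply/eqP; rewrite eq_le; apply/andP; split.
  - apply: bmax_le => [|b bAl]; last exact: KKT.
    by rewrite /s; apply: sumr_ge0 => a _; rewrite mulr_ge0.
  - by rewrite sAl; apply: conv_le => // a aAl; exact: bmax_ge.
set Voff := Vmat A poff.
have VE : V = (1 - al) *: Vmat A pstar + al *: Voff by rewrite /V /pt /mix Vmat_lin.
have Vpsd : forall y, 0 <= wnorm2 V y by move=> y; apply: Vmat_psd => a _; exact: ptge0.
have Offpsd : forall y, 0 <= wnorm2 Voff y by move=> y; apply: Vmat_psd => a _; exact: poffge0.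
have Pipsd : forall y, 0 <= wnorm2 (Vmat A pstar) y by move=> y; apply: Vmat_psd => a _; exact: psge0.
set So := \sum_(a <- A) poff a * nV a.
have So0 : 0 <= So by apply: sumr_ge0 => a _; rewrite mulr_ge0.
split.
- by rewrite gE.
- rewrite gE /deff /= le_min; apply/andP; split.
  + rewrite lee_fin.
    have gAE : (1 - al) * s = d%:R - al * So by rewrite dE addrK.
    set Mx := \big[Num.max/0]_(a <- A) (a^T *m a) 0 0.
    have triv : (Toff = 0%N) \/ (Mx = 0) -> (1 - al) * s <=
       \sum_(k < d) (1 + Toff%:R / T%:R * (lam k / Mx))^-1.
      move=> h; have -> : \sum_(k < d) (1 + Toff%:R / T%:R * (lam k / Mx))^-1 = d%:R.
        rewrite (eq_bigr (fun _ => 1)) ?sumr_const ?card_ord // => k _.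
        by case: h => ->; rewrite ?mul0r ?invr0 ?mulr0 ?addr0 ?invr1.
      by rewrite gAE gerDl oppr_le0 mulr_ge0.
    have [Tz|Tnz] := eqVneq Toff 0%N; first by apply: triv; left.
    have [Mz|Mnz] := eqVneq Mx 0; first by apply: triv; right.
    have Mp : 0 < Mx by rewrite lt0r Mnz bmax_ge0.
    have alp : 0 < al by rewrite /al divr_gt0 // ltr0n lt0n.
    set c := (1 - al) * Mx.
    have cp : 0 < c by rewrite mulr_gt0.
    set N := c%:M + al *: Voff.
    have wN : forall x, wnorm2 N x = c * (x^T *m x) 0 0 + al * wnorm2 Voff x.
      by move=> x; rewrite wn_lin /wnorm2 mul_mx_scalar -scalemxAl eZ.
    have uN : N \in unitmx.
      apply: pd_unit => x x0; rewrite wN.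
      have h2 : 0 < (x^T *m x) 0 0.
        by rewrite lt0r dot_ge0 andbT; apply: contra x0 => /eqP /dot_eq0 ->.
      have := Offpsd x; nra.
    have sN : N^T = N by rewrite /N linearD /= tr_scalar_mx linearZ /= Vmat_sym.
    have Vpi_le : forall y, wnorm2 (Vmat A pstar) y <= Mx * (y^T *m y) 0 0.
      move=> y; rewrite Vmat_quad.
      apply: (@le_trans _ _ (\sum_(a <- A) pstar a * (Mx * (y^T *m y) 0 0))).
        rewrite big_seq [X in _ <= X]big_seq; apply: ler_sum => a aA.
        rewrite ler_wpM2l //; apply: (le_trans (@CS _ _ a y)).
        by rewrite ler_wpM2r ?dot_ge0 //; apply: (@bmax_ge _ _ A (fun a => (a^T *m a) 0 0)).
      by rewrite -mulr_suml (@sum_sub _ _ A Al) ?ps1 ?mul1r.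
    have VleN : forall y, wnorm2 V y <= wnorm2 N y.
      move=> y; rewrite VE wN wn_D !wn_Z lerD2r /c -mulrA ler_wpM2l ?Vpi_le //.
      exact: ltW.
    set SoN := \sum_(a <- A) poff a * wnorm2 (invmx N) a.
    have SoNle : SoN <= So.
      apply: ler_sum => a _; rewrite ler_wpM2l //.
      exact: loewner.
    have alSoN : al * SoN = d%:R - c * \tr (invmx N).
      rewrite /SoN sum_tr -mxtraceZ scalemxAr.
      have -> : al *: Voff = N - c%:M by rewrite /N addrAC subrr add0r.
      by rewrite mulmxBr mulVmx // mul_mx_scalar raddfB /= mxtrace1 mxtraceZ.
    have trN := @trinv_eig _ _ _ _ _ _ (proj1 spec) (lt0r_neq0 alp) uN.
    apply: (@le_trans _ _ (c * \tr (invmx N))).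
      rewrite gAE; have := ler_wpM2l (ltW alp) SoNle; lra.
    rewrite trN mulr_sumr le_eqVlt; apply/orP; left; apply/eqP.
    apply: eq_bigr => k _.
    have -> : c + al * lam k = c * (1 + Toff%:R / T%:R * (lam k / Mx)).
      rewrite /c omaE /al; field.
      by rewrite Mnz -natrD !gt_eqF.
    by rewrite invfM mulrA mulfV ?mul1r // gt_eqF.
  + case: ifP => [/andP [Tp uOff] | _]; last by rewrite leey.
    rewrite lee_fin.
    have alp : 0 < al by rewrite /al divr_gt0 // ltr0n.
    have al0' : al != 0 by rewrite gt_eqF.
    have ualV : al *: Voff \in unitmx by rewrite unitmxZ // unitfE.
    set gA := gfun A A poff.
    have sle : s <= al^-1 * gA.
      rewrite -gE; apply: bmax_le => [|b bAl].
        by rewrite mulr_ge0 ?invr_ge0 ?(ltW alp) // bmax_ge0.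
      apply: (@le_trans _ _ (wnorm2 (invmx (al *: Voff)) b)).
        apply: loewner => //.
        - by rewrite linearZ /= Vmat_sym.
        - by move=> y; rewrite wn_Z mulr_ge0.
        - move=> y; rewrite -/V VE wn_D !wn_Z lerDr mulr_ge0 //; exact: ltW.
      rewrite invmxZ // wn_Z ler_wpM2l ?invr_ge0 ?(ltW alp) //.
      by apply: bmax_ge; apply: sub.
    have -> : T%:R / Toff%:R = (1 - al) * al^-1.
      rewrite omaE /al; field.
      by rewrite -natrD gt_eqF //= pnatr_eq0 -lt0n.
    by rewrite -mulrA ler_wpM2l // ltW.
- exact: C3.
Qed.
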